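(* Let $R$ be a left localizable ring such that $\max\mathrm{Den}_l(R)=\{S_1,\ldots,S_n\}$ (with the $S_i$ distinct), and let $\mathfrak{a}_j:=\mathrm{ass}(S_j)$. (1) If $n=1$ then $S_{1,c}=S_1=R\setminus\{0\}$. (2) If $n\geq 2$ then $S_{i,c}=S_i\cap\bigcap_{j\neq i}\mathfrak{a}_j$ for each $i=1,\ldots,n$.
   Context: All rings are associative with $1$. A multiplicative subset $S$ of $R$ ($1\in S$, $0\notin S$, closed under multiplication) is a left Ore set if $Sr\cap Rs\neq\emptyset$ for all $r\in R$, $s\in S$; for it, $\mathrm{ass}(S):=\{r\in R: sr=0\text{ for some } s\in S\}$. A left Ore set $S$ is a left denominator set if $rs=0$ ($r\in R$, $s\in S$) implies $tr=0$ for some $t\in S$. $\max\mathrm{Den}_l(R)$ is the set of maximal elements, under inclusion, of the set of left denominator sets of $R$. A ring $R$ is left localizable if every nonzero $r\in R$ lies in some left denominator set. For $s\in R$, $\ker(s\cdot):=\{r\in R: sr=0\}$; the core of a left Ore set $S$ is $S_c:=\{s\in S:\ker(s\cdot)=\mathrm{ass}(S)\}$, and $S_{i,c}$ denotes the core of $S_i$. *)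

(* Defs.v *)
From mathcomp Require Import all_boot all_order all_algebra.
Set Implicit Arguments. Unset Strict Implicit. Unset Printing Implicit Defensive.
Import GRing.Theory.
Local Open Scope ring_scope.

Definition set_eq (R : Type) (A B : R -> Prop) : Prop := forall x, A x <-> B x.
Definition subset (R : Type) (A B : R -> Prop) : Prop := forall x, A x -> B x.

Section Ore.
Variable R : pzRingType.

Definition mult_subset (S : R -> Prop) : Prop :=
  S 1 /\ ~ S 0 /\ (forall a b, S a -> S b -> S (a * b)).

Definition left_Ore (S : R -> Prop) : Prop :=
  mult_subset S /\
  (forall r s, S s -> exists s' r', S s' /\ s' * r = r' * s).

Definition ass (S : R -> Prop) (r : R) : Prop := exists s, S s /\ s * r = 0.

Definition left_den (S : R -> Prop) : Prop :=
  left_Ore S /\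
  (forall r s, S s -> r * s = 0 -> exists t, S t /\ t * r = 0).

Definition max_left_den (S : R -> Prop) : Prop :=
  left_den S /\ (forall T, left_den T -> subset S T -> subset T S).

Definition left_localizable : Prop :=
  forall r : R, r != 0 -> exists S, left_den S /\ S r.

Definition lker (s : R) (r : R) : Prop := s * r = 0.

Definition core (S : R -> Prop) (s : R) : Prop :=
  S s /\ set_eq (lker s) (ass S).
End Ore.

(* Main.v *)
Require Import Defs.
From mathcomp Require Import all_boot all_order all_algebra.
From Stdlib Require Import Classical FunctionalExtensionality PropExtensionality.
From mathcomp Require classical_sets.
Set Implicit Arguments. Unset Strict Implicit. Unset Printing Implicit Defensive.
Import GRing.Theory.
Local Open Scope ring_scope.

Section Red.
Variable R : pzRingType.
Hypothesis red : forall x : R, x * x = 0 -> x = 0.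

Lemma rev_ (x y : R) : x * y = 0 -> y * x = 0.
Proof. by move=> h; apply: red; rewrite -mulrA (mulrA x) h mul0r mulr0. Qed.

Lemma ifp (x y r : R) : x * y = 0 -> x * r * y = 0.
Proof.
move=> h; apply: red; have h' := rev_ h.
have -> : x*r*y*(x*r*y) = x*r*(y*x)*(r*y) by rewrite !mulrA.
by rewrite h' mulr0 mul0r.
Qed.

Lemma sqr (y x : R) : y * x * x = 0 -> y * x = 0.
Proof. by move=> h; apply: red; rewrite -mulrA (rev_ h) mulr0. Qed.

Lemma sql (z w : R) : z * z * w = 0 -> z * w = 0.
Proof.
move=> h; apply: red; rewrite -mulrA in h; have h' := rev_ h.
by rewrite mulrA h' mul0r.
Qed.

Lemma swap (u v w : R) : u * v * w = 0 -> v * u * w = 0.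
Proof.
move=> h; apply: sql; have h1 : u*v*u*w = 0 by apply: ifp.
have -> : v*u*(v*u)*w = v*(u*v*u*w) by rewrite !mulrA.
by rewrite h1 mulr0.
Qed.

Lemma swap_mid (q u v w : R) : q*u*v*w = 0 -> q*v*u*w = 0.
Proof.
move=> h; have h0 : q*(u*v*w) = 0 by rewrite !mulrA.
have h1 := rev_ h0.
have h2 : u*v*(w*q) = 0 by rewrite mulrA.
have h3 := swap h2; rewrite mulrA in h3.
by have := rev_ h3; rewrite !mulrA.
Qed.

Section Join.
Variables S T : R -> Prop.
Hypothesis hS : left_den S.
Hypothesis hT1 : T 1.
Hypothesis hTm : forall a b, T a -> T b -> T (a * b).
Hypothesis hTore : forall t, T t -> forall r, exists w r', (S w \/ T w) /\ w * r = r' * t.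
Hypothesis hnz : forall s t, S s -> T t -> s * t <> 0.

Inductive gen : R -> Prop :=
| gS s : S s -> gen s
| gT t : T t -> gen t
| gM a b : gen a -> gen b -> gen (a * b).

Lemma gen_zero u : gen u -> exists s t, S s /\ T t /\ forall r, u * r = 0 <-> s * t * r = 0.
Proof.
have [[[S1 [S0 Sm]] Sore] Sden] := hS.
elim=> [s Ss|t Tt|a b _ [s1 [t1 [Ss1 [Tt1 IH1]]]] _ [s2 [t2 [Ss2 [Tt2 IH2]]]]].
- by exists s, 1; split=> //; split=> // r; rewrite mulr1.
- by exists 1, t; split=> //; split=> // r; rewrite mul1r.
exists (s2 * s1), (t2 * t1); split; first exact: Sm.
split; first exact: hTm.
move=> r; split=> h.
- have h1 : s1*t1*(b*r) = 0 by apply/IH1; rewrite mulrA.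
  rewrite mulrA in h1; have h2 := swap h1.
  have h3 : b*(s1*t1*r) = 0 by rewrite mulrA.
  have h4 := proj1 (IH2 _) h3.
  have h5 : s2*t2*s1*(t1*r) = 0 by move: h4; rewrite !mulrA.
  by move: (swap_mid h5); rewrite !mulrA.
- have h5 : s2*s1*t2*(t1*r) = 0 by move: h; rewrite !mulrA.
  have h4 : s2*t2*(s1*t1*r) = 0 by move: (swap_mid h5); rewrite !mulrA.
  have h3 := proj2 (IH2 _) h4.
  have h2 : b*(s1*t1)*r = 0 by move: h3; rewrite !mulrA.
  have h1 : s1*t1*(b*r) = 0 by move: (swap h2); rewrite !mulrA.
  by move: (proj2 (IH1 _) h1); rewrite !mulrA.
Qed.

Lemma gen_ore u : gen u -> forall r, exists w r', gen w /\ w * r = r' * u.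
Proof.
have [[[S1 [S0 Sm]] Sore] Sden] := hS.
elim=> [s Ss|t Tt|a b _ IHa _ IHb] r.
- by have [s' [r' [Ss' e]]] := Sore r s Ss; exists s', r'; split=> //; exact: gS.
- have [w [r' [[Sw|Tw] e]]] := hTore Tt r; exists w, r'; split=> //.
  + exact: gS.
  + exact: gT.
have [w1 [r1 [g1 e1]]] := IHb r.
have [w2 [r2 [g2 e2]]] := IHa r1.
exists (w2 * w1), r2; split; first exact: gM.
by rewrite -mulrA e1 mulrA e2 mulrA.
Qed.

Lemma gen_den : left_den gen.
Proof.
have [[[S1 [S0 Sm]] Sore] Sden] := hS.
split; [split; [split; [exact: gS|split]|move=> r s gs; exact: gen_ore gs r]|].
- move=> /gen_zero [s [t [Ss [Tt h]]]].
  by apply: (hnz Ss Tt); rewrite -[s * t]mulr1; apply/h; rewrite mul0r.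
- by move=> a b ga gb; exact: gM.
by move=> r s gs h; exists s; split=> //; exact: rev_.
Qed.

Lemma join_max : max_left_den S -> forall t, T t -> S t.
Proof.
move=> [_ Smax] t Tt.
by apply: (Smax gen gen_den) => [x Sx|]; [exact: gS|exact: gT].
Qed.

End Join.

Lemma sat (S : R -> Prop) (x q : R) : max_left_den S ->
  (forall s, S s -> s * x <> 0) -> S (q * x) -> S x.
Proof.
move=> Smax hx Sqx.
have [[[[S1 [S0 Sm]] Sore] Sden] _] := Smax.
pose T y := exists k, y = x ^+ k.
have key : forall k s, S s -> s * x ^+ k.+1 <> 0.
  elim=> [|k IH] s Ss; first by rewrite expr1; exact: hx.
  move=> h; apply: (IH s Ss).
  have h' : s * x ^+ k * x * x = 0.
    by move: h; rewrite !exprSr !mulrA.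
  by move: (sqr h'); rewrite exprSr mulrA.
apply: (@join_max S T) => //.
- by exists 0%N; rewrite expr0.
- by move=> a b [k ->] [l ->]; exists (k + l)%N; rewrite exprD.
- move=> t [k ->] r; suff : exists w r', S w /\ w * r = r' * x ^+ k.
    by move=> [w [r' [Sw e]]]; exists w, r'; split=> //; left.
  elim: k r => [|k IH] r; first by exists 1, r; rewrite mul1r expr0 mulr1.
  have [w1 [r1 [Sw1 e1]]] := Sore r _ Sqx.
  have [w2 [r2 [Sw2 e2]]] := IH (r1 * q).
  exists (w2 * w1), r2; split; first exact: Sm.
  by rewrite -mulrA e1 (mulrA r1) mulrA e2 exprSr mulrA.
- move=> s t Ss [[|k] ->]; last exact: key.
  by rewrite expr0 mulr1 => s0; apply: S0; rewrite -s0.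
- by exists 1%N; rewrite expr1.
Qed.

End Red.

Section Zorn.
Variable R : pzRingType.

Lemma pred_ext (X Y : R -> Prop) : (forall r, X r <-> Y r) -> X = Y.
Proof.
move=> h; apply: functional_extensionality => r.
exact: propositional_extensionality.
Qed.

Lemma chain_union (I : Type) (W : I -> R -> Prop) (V : R -> Prop) (i0 : I) :
  (forall i, left_den (W i)) ->
  (forall i j, Defs.subset (W i) (W j) \/ Defs.subset (W j) (W i)) ->
  (forall r, V r <-> exists i, W i r) -> left_den V.
Proof.
move=> hW hch hV.
have inV i r : W i r -> V r by move=> h; apply/hV; exists i.
split; [split; [split; [|split]|]|].
- by apply: (inV i0); have [[[h1 _] _] _] := hW i0.
- by move=> /hV [i h]; have [[[_ [n0 _]] _] _] := hW i; exact: n0 h.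
- move=> a b /hV [i ha] /hV [j hb].
  have [sij|sji] := hch i j.
  + apply: (inV j); have [[[_ [_ m]] _] _] := hW j; exact: m (sij _ ha) hb.
  + apply: (inV i); have [[[_ [_ m]] _] _] := hW i; exact: m ha (sji _ hb).
- move=> r s /hV [i h]; have [[_ o]] := hW i.
  by have [s' [r' [h1 h2]]] := o r s h; exists s', r'; split=> //; exact: inV h1.
- move=> r s /hV [i h] e; have [_ d] := hW i.
  by have [t [h1 h2]] := d r s h e; exists t; split=> //; exact: inV h1.
Qed.

Lemma exists_max (T0 : R -> Prop) : left_den T0 ->
  exists M, max_left_den M /\ Defs.subset T0 M.
Proof.
move=> hT0.
pose P := fun X : R -> Prop => left_den (fun r => X r \/ T0 r).
have [|A [PA Amax]] := @classical_sets.Zorn_bigcup R P.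
  move=> F FP Ftot.
  pose I := option {X : R -> Prop | F X}.
  pose W (i : I) := match i with None => T0 | Some X => fun r => sval X r \/ T0 r end.
  apply: (@chain_union I W _ None).
  - by case=> [[X FX]|] //=; exact: FP.
  - case=> [[X FX]|]; case=> [[Y FY]|] /=.
    + have [h|h] := Ftot X Y FX FY.
      * by left=> r [hr|hr]; [left; exact: h|right].
      * by right=> r [hr|hr]; [left; exact: h|right].
    + by right=> r hr; right.
    + by left=> r hr; right.
    + by left.
  - move=> r; split.
    + move=> [[X FX Xr]|h]; last by exists None.
      by exists (Some (exist _ X FX)); left.
    + move=> [[[X FX]|] /= h].
      * by case: h => h; [left; exists X|right].
      * by right.
exists (fun r => A r \/ T0 r); split; last by move=> r h; right.
split=> // T' hT' sub x T'x; apply: NNPP => nAx.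
have nA : ~ A x by move=> h; apply: nAx; left.
apply: (Amax T').
  split; first by move=> r h; apply: sub; left.
  by move=> h; apply: nA; exact: h.
rewrite /P (_ : (fun r => T' r \/ T0 r) = T') //.
by apply: pred_ext => r; split=> [[h|h]|h]; [|apply: sub; right|left].
Qed.

End Zorn.

Section Main.
Variable R : pzRingType.

Lemma loc_red : left_localizable R -> forall x : R, x * x = 0 -> x = 0.
Proof.
move=> LL x h; case: (eqVneq x 0) => // nx.
have [S [[[[S1 [S0 Sm]] _] _] Sx]] := LL x nx.
by exfalso; apply: S0; rewrite -h; exact: Sm.
Qed.

Lemma ass_left (S : R -> Prop) r y : left_Ore S -> ass S y -> ass S (r * y).
Proof.
move=> [[S1 [S0 Sm]] Sore] [s [Ss e]].
have [s' [r' [Ss' e']]] := Sore r s Ss.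
by exists s'; split=> //; rewrite mulrA e' -mulrA e mulr0.
Qed.

Lemma ass_right (S : R -> Prop) r y : ass S y -> ass S (y * r).
Proof. by move=> [s [Ss e]]; exists s; split=> //; rewrite mulrA e mul0r. Qed.

Lemma S_not_ass (S : R -> Prop) y : mult_subset S -> S y -> ass S y -> False.
Proof.
move=> [S1 [S0 Sm]] Sy [s [Ss e]]; apply: S0; rewrite -e; exact: Sm.
Qed.

End Main.

Theorem theorem4p5 (R : pzRingType) (n : nat) (S : 'I_n -> (R -> Prop)) :
  left_localizable R ->
  (forall T : R -> Prop, max_left_den T <-> exists i, set_eq T (S i)) ->
  (forall i j, set_eq (S i) (S j) -> i = j) ->
  (n = 1%N -> forall i, set_eq (core (S i)) (S i) /\
                        set_eq (S i) (fun r => r != 0)) /\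
  ((2 <= n)%N -> forall i,
     set_eq (core (S i)) (fun r => S i r /\ forall j, j != i -> ass (S j) r)).
Proof.
move=> LL HM Hinj.
have red := loc_red LL.
have Smax : forall i, max_left_den (S i).
  by move=> i; apply/HM; exists i.
have Sden : forall i, left_den (S i) by move=> i; have [] := Smax i.
have Smul : forall i, mult_subset (S i) by move=> i; have [[]] := Sden i.
have Sore : forall i, left_Ore (S i) by move=> i; have [] := Sden i.
have cover : forall r, r != 0 -> exists k, S k r.
  move=> r nr; have [T [dT Tr]] := LL r nr.
  have [M [mM sM]] := exists_max dT.
  have [k hk] := (proj1 (HM M)) mM.
  by exists k; apply/hk; exact: sM.
have SnA : forall k y, S k y -> ass (S k) y -> False.
  by move=> k y; apply: S_not_ass.
have D : forall i k, k != i -> exists p, S i p /\ ass (S k) p.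
  move=> i k nki; apply: NNPP => hne.
  have hnz : forall s t, S i s -> S k t -> s * t <> 0.
    move=> s t Ss St e; apply: hne; exists s; split=> //.
    by exists t; split=> //; exact: rev_ e.
  have sub : forall t, S k t -> S i t.
    apply: (@join_max R red (S i) (S k)) => //.
    - by have [] := Smul k.
    - by have [_ []] := Smul k.
    - move=> t St r; have [_ o] := Sore k.
      by have [s' [r' [h1 h2]]] := o r t St; exists s', r'; split=> //; right.
  have sub' : forall t, S i t -> S k t.
    by have [_ m] := Smax k; apply: m => //; exact: Sden.
  have := Hinj i k (fun x => conj (sub' x) (sub x)).
  by move=> e; move: nki; rewrite e eqxx.
have E : forall i, exists p, S i p /\ forall k, k != i -> ass (S k) p.
  move=> i.
  suff : forall m, exists p, S i p /\ forall k : 'I_n, (k < m)%N -> k != i -> ass (S k) p.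
    by move=> /(_ n) [p [Sp h]]; exists p; split=> // k; apply: h.
  elim=> [|m [p [Sp IH]]]; first by exists 1; split=> //; have [] := Smul i.
  case: (ltnP m n) => hm; last first.
    exists p; split=> // k hk; apply: IH; exact: (leq_trans (ltn_ord k) hm).
  case: (eqVneq (Ordinal hm) i) => him.
    exists p; split=> // k; rewrite ltnS leq_eqVlt => /orP [/eqP ek|hk]; last exact: IH.
    move=> nki; have ek' : k = i by rewrite -him; apply: val_inj.
    by rewrite ek' eqxx in nki.
  have [p' [Sp' ap']] := D i _ him.
  exists (p * p'); split; first by have [_ [_ m']] := Smul i; exact: m'.
  move=> k; rewrite ltnS leq_eqVlt => /orP [/eqP ek|hk] nki.
    have -> : k = Ordinal hm by apply: val_inj.
    exact: ass_left.
  exact: ass_right (IH k hk nki).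
have F : forall i x, ~ ass (S i) x -> S i x.
  move=> i x nax; have [p [Sp hp]] := E i.
  apply: (@sat R red (S i) x p (Smax i)).
    by move=> s Ss e; apply: nax; exists s.
  have npx : p * x != 0.
    by apply/eqP => e; apply: nax; exists p.
  have [k Sk] := cover _ npx.
  case: (eqVneq k i) => [<- //|nki].
  by exfalso; apply: (SnA k _ Sk); apply: ass_right; exact: hp.
have C : forall i r, core (S i) r <-> S i r /\ forall j, j != i -> ass (S j) r.
  move=> i r; split.
  - move=> [Sr hk]; split=> // j nji; apply: NNPP => naj.
    have Sjr := F j r naj.
    have nij : i != j by rewrite eq_sym.
    have [p [Sjp aip]] := D j i nij.
    have rp0 : r * p = 0 by apply/hk.
    have [_ [S0 m]] := Smul j; apply: S0; rewrite -rp0; exact: m.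
  - move=> [Sr hj]; split=> // y; split; first by move=> e; exists r.
    move=> ay; apply: NNPP => nry.
    have [k Sk] := cover (r * y) (introN eqP nry).
    case: (eqVneq k i) => [eki|nki].
      by subst k; apply: (SnA i _ Sk); apply: ass_left.
    by apply: (SnA k _ Sk); apply: ass_right; exact: hj.
split.
  move=> n1 i; split.
    move=> r; rewrite C; split; first by case.
    move=> Sr; split=> // j nji; exfalso; move: nji.
    suff -> : j = i by rewrite eqxx.
    by subst n; rewrite (ord1 i) (ord1 j).
  move=> r; split.
    by move=> Sr; apply/eqP => e; have [_ [S0 _]] := Smul i; apply: S0; rewrite -e.
  move=> nr; have [k Sk] := cover r nr.
  suff <- : k = i by [].
  by subst n; rewrite (ord1 i) (ord1 k).
by move=> _ i r; exact: C.
Qed.
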